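(* Let $G$ be a finite simple graph with vertices in $\mathbb{N}$ and let $G_1,\ldots,G_m$ be its connected components. Then the independence complex $\Delta(G)$ is sortable if and only if each $\Delta(G_r)$, $r=1,\dots,m$, is sortable.
   Context: The independence complex $\Delta(G)$ of a graph $G$ is the simplicial complex of all independent sets of vertices of $G$ (sets containing no edge). For finite $F,G\subset\mathbb{N}$ with $|F|=r,|G|=s$, write $\mathbf{x}^F\mathbf{x}^G=x_{i_1}\cdots x_{i_{r+s}}$ with $i_1\le\cdots\le i_{r+s}$ (where $\mathbf{x}^F=\prod_{i\in F}x_i$) and set $\mathrm{sort}(F,G)=(\{i_k:k\text{ odd}\},\{i_k:k\text{ even}\})$. A simplicial complex $\Delta$ with $V(\Delta)\subset\mathbb{N}$ is sortable with respect to the given labeling if $\mathrm{sort}(F,G)\in\Delta\times\Delta$ for all $F,G\in\Delta$; it is sortable if it is sortable with respect to some labeling of its vertices by distinct integers. *)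

(* Defs.v *)
From mathcomp Require Import all_boot.
Set Implicit Arguments. Unset Strict Implicit. Unset Printing Implicit Defensive.

(* A finite subset of N is represented by a list (as a set via membership;
   duplicates are irrelevant).  A simplicial complex is given by its face
   predicate  D : seq nat -> Prop  and a vertex predicate  P : nat -> Prop. *)

(* sort(F,G): write x^F x^G = x_{i_1}...x_{i_{r+s}} with i_1 <= ... <= i_{r+s};
   first component = entries at odd positions k (1-based), second = even. *)
Definition sort_pair (F G : seq nat) : seq nat * seq nat :=
  let s := sort leq (undup F ++ undup G) in
  ([seq nth 0 s i | i <- iota 0 (size s) & ~~ odd i],
   [seq nth 0 s i | i <- iota 0 (size s) & odd i]).

Definition sortable_wrt (D : seq nat -> Prop) : Prop :=
  forall F G, D F -> D G -> D (sort_pair F G).1 /\ D (sort_pair F G).2.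

Definition relabel (D : seq nat -> Prop) (f : nat -> nat) : seq nat -> Prop :=
  fun F' => exists2 F, D F & F' =i map f F.

Definition sortable (P : nat -> Prop) (D : seq nat -> Prop) : Prop :=
  exists f : nat -> nat,
    (forall x y, P x -> P y -> f x = f y -> x = y) /\ sortable_wrt (relabel D f).

Definition indep_complex (P : nat -> Prop) (E : rel nat) : seq nat -> Prop :=
  fun F => (forall x, x \in F -> P x) /\ (forall x y, x \in F -> y \in F -> ~~ E x y).

Definition connected (E : rel nat) (x y : nat) : Prop :=
  exists p : seq nat, path E x p /\ last x p = y.

Definition component (V : seq nat) (E : rel nat) (x : nat) : nat -> Prop :=
  fun y => y \in V /\ connected E x y.

(* Main.v *)
Require Import Defs.
From mathcomp Require Import all_boot zify.
From Stdlib Require Import ClassicalEpsilon.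

Lemma count0_all (s : seq nat) (p : pred nat) : (forall y, y \in s -> ~~ p y) -> count p s = 0.
Proof. move=> H; apply/eqP; rewrite -leqn0 leqNgt -has_count; by apply/hasPn. Qed.

Lemma nth_sorted_count (x : nat) (s : seq nat) : sorted leq s -> forall i,
  (i < size s) && (nth 0 s i == x) =
  (count (fun y => y < x) s <= i) && (i < count (fun y => y <= x) s).
Proof.
elim: s => [|a s IH] Hs i /=; first by rewrite !ltn0 ?andbF.
have Hall : all (leq a) s := order_path_min leq_trans Hs.
have {IH}IH := IH (path_sorted Hs).
have Hlt : x <= a -> count (fun y => y < x) s = 0.
  move=> xa; apply: count0_all => y /(allP Hall) ay; rewrite -leqNgt; exact: leq_trans xa ay.
have Hle : x < a -> count (fun y => y <= x) s = 0.
  move=> xa; apply: count0_all => y /(allP Hall) ay; rewrite -ltnNge; exact: leq_trans xa ay.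
case: i => [|i] /=.
  case: (ltngtP a x) => h.
  - by rewrite add1n.
  - by rewrite Hle // /= ?add0n ?addn0 ?ltnn ?andbF.
  - by subst; rewrite Hlt // /= ?add0n ?add1n.
rewrite ltnS IH.
case: (ltngtP a x) => h /=.
- rewrite !add1n ltnS [i.+1 < _]ltnS. reflexivity.
- rewrite (Hle h) (Hlt (ltnW h)) !addn0 !ltn0 !andbF. reflexivity.
- subst x; rewrite (Hlt (leqnn a)) !add0n add1n [i.+1 < _]ltnS. reflexivity.
Qed.

Lemma count_le_split (s : seq nat) x : count (fun y => y <= x) s = count (fun y => y < x) s + count (pred1 x) s.
Proof.
elim: s => [|a s IH] /=. reflexivity.
rewrite IH. case: (ltngtP a x) => h.
- rewrite add0n addnA; reflexivity.
- rewrite !add0n; reflexivity.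
- rewrite add0n !add1n addnS; reflexivity.
Qed.

Lemma mem_nthfilt (s : seq nat) x (P : pred nat) : sorted leq s ->
  reflect (exists i, P i && (count (fun y => y < x) s <= i < count (fun y => y < x) s + count (pred1 x) s))
          (x \in [seq nth 0 s i | i <- iota 0 (size s) & P i]).
Proof.
move=> Hs; rewrite -count_le_split.
apply: (iffP mapP) => [[i]|[i /andP[Pi Hi]]].
  rewrite mem_filter mem_iota add0n => /andP[Pi /andP[_ His]] Ex.
  exists i; move: (nth_sorted_count x s Hs i); rewrite His -Ex eqxx /= => H; rewrite Pi /=; rewrite -H; reflexivity.
exists i; last first.
  have {Hi}Hi : (i < size s) && (nth 0 s i == x) by rewrite (nth_sorted_count x s Hs i). case/andP: Hi => _ /eqP ->. reflexivity.
rewrite mem_filter mem_iota add0n Pi leq0n.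
have {Hi}Hi : (i < size s) && (nth 0 s i == x) by rewrite (nth_sorted_count x s Hs i). case/andP: Hi => -> _. reflexivity.
Qed.

Lemma parity_ex (b : bool) c m :
  (exists i, (odd i == b) && (c <= i < c + m)) <-> ((0 < m) && ((odd c == b) || (1 < m))).
Proof.
split.
  case=> i /andP[Hb /andP[H1 H2]].
  have -> : 0 < m by lia.
  case E: (odd c == b) => //=.
  have : c != i. apply/eqP => ci. by rewrite ci Hb in E.
  lia.
case/andP=> Hm /orP[Hc|Hm2].
  exists c; rewrite Hc /=; lia.
case E: (odd c == b).
  exists c; rewrite E /=; lia.
exists c.+1. rewrite oddS.
have -> : (~~ odd c == b). by move: E; case: (odd c); case: b.
simpl; lia.
Qed.

Definition sp (b : bool) F G := if b then (sort_pair F G).2 else (sort_pair F G).1.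
Definition cl (F G : seq nat) x := count (fun y => y < x) (undup F) + count (fun y => y < x) (undup G).
Definition mu (F G : seq nat) (x : nat) : nat := (x \in F) + (x \in G).

Lemma mem_sp b F G x : (x \in sp b F G) = (0 < mu F G x) && ((odd (cl F G x) == b) || (1 < mu F G x)).
Proof.
set s := sort leq (undup F ++ undup G).
have Hs : sorted leq s := sort_sorted leq_total _.
have Hc : forall p, count p s = count p (undup F) + count p (undup G).
  by move=> p; rewrite count_sort count_cat.
have Hm : count (pred1 x) s = mu F G x.
  by rewrite Hc !count_uniq_mem ?undup_uniq // !mem_undup.
have key : forall P : pred nat, (forall i, P i = (odd i == b)) ->
   (x \in [seq nth 0 s i | i <- iota 0 (size s) & P i]) =
   (0 < mu F G x) && ((odd (cl F G x) == b) || (1 < mu F G x)).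
  move=> P HP; apply/idP/idP.
    move/(mem_nthfilt s x P Hs)=> [i]; rewrite HP Hc Hm => Hi. apply/(parity_ex b). exists i. exact Hi.
  move/(parity_ex b) => [i Hi]; apply/(mem_nthfilt s x P Hs); exists i; rewrite HP Hc Hm; exact Hi.
rewrite /sp /sort_pair -/s; case: b key => /= key; apply: key => i.
  by case: (odd i).
by case: (odd i).
Qed.

Lemma count_undup_eqi (p : pred nat) (s1 s2 : seq nat) : s1 =i s2 -> count p (undup s1) = count p (undup s2).
Proof.
move=> e; apply: (permP (uniq_perm (undup_uniq s1) (undup_uniq s2) _)) => y.
by rewrite !mem_undup e.
Qed.

Lemma mu_eqi F G F' G' x : F =i F' -> G =i G' -> mu F G x = mu F' G' x.
Proof. by move=> eF eG; rewrite /mu eF eG. Qed.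

Lemma cl_eqi F G F' G' x : F =i F' -> G =i G' -> cl F G x = cl F' G' x.
Proof. by move=> eF eG; rewrite /cl (count_undup_eqi _ _ _ eF) (count_undup_eqi _ _ _ eG). Qed.

Lemma sp_eqi b F G F' G' : F =i F' -> G =i G' -> sp b F G =i sp b F' G'.
Proof. by move=> eF eG x; rewrite !mem_sp (mu_eqi _ _ _ _ x eF eG) (cl_eqi _ _ _ _ x eF eG). Qed.

Lemma mem_map_injP (P : nat -> Prop) (f : nat -> nat) (s : seq nat) u :
  (forall x y, P x -> P y -> f x = f y -> x = y) -> (forall y, y \in s -> P y) -> P u ->
  (f u \in map f s) = (u \in s).
Proof.
move=> finj sP Pu; apply/mapP/idP => [[y ys fy]|us]; last by exists u.
by rewrite (finj u y Pu (sP y ys) fy).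
Qed.

Lemma count_undup_map_inj (P : nat -> Prop) (f : nat -> nat) (s : seq nat) (p : pred nat) :
  (forall x y, P x -> P y -> f x = f y -> x = y) -> (forall y, y \in s -> P y) ->
  count p (undup (map f s)) = count (fun y => p (f y)) (undup s).
Proof.
move=> finj sP.
have -> : count (fun y => p (f y)) (undup s) = count p (map f (undup s)) by rewrite count_map.
apply: (permP (uniq_perm (undup_uniq _) _ _)).
  rewrite map_inj_in_uniq ?undup_uniq // => x y; rewrite !mem_undup => xs ys.
  exact: finj (sP x xs) (sP y ys).
move=> y; rewrite mem_undup; apply/mapP/mapP => [[z zs ->]|[z zs ->]]; exists z; rewrite ?mem_undup //.
by rewrite mem_undup in zs.
Qed.

Lemma count_split3 (s : seq nat) (a b c : pred nat) :
  (forall x, x \in s -> (a x : nat) = b x + c x) -> count a s = count b s + count c s.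
Proof.
elim: s => [|y s IH] H /=. reflexivity.
rewrite (H y (mem_head _ _)) IH; last by move=> x xs; apply: H; rewrite in_cons xs orbT.
lia.
Qed.

Lemma block_lt M i j a b : a < M -> b < M ->
  ((i * M + a < j * M + b) : nat) = (i < j) + ((i == j) && (a < b)).
Proof.
move=> aM bM. case: (ltngtP i j) => h /=.
- have : i * M + a < j * M + b by nia.
  by move=> ->.
- have : ~~ (i * M + a < j * M + b) by rewrite -leqNgt; nia.
  by move/negbTE=> ->.
- subst j; rewrite ltn_add2l; by case: (a < b).
Qed.

Lemma block_inj M i j a b : a < M -> b < M -> i * M + a = j * M + b -> i = j /\ a = b.
Proof. move=> aM bM E. have ij : i = j by nia. subst j; split => //; lia. Qed.

Lemma le_sumn (f : nat -> nat) (s : seq nat) v : v \in s -> f v <= sumn (map f s).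
Proof.
elim: s => [|y s IH] //=; rewrite in_cons => /orP[/eqP ->|vs]; first exact: leq_addr.
apply: leq_trans (IH vs) _; exact: leq_addl.
Qed.

Lemma forward (V : seq nat) (E : rel nat) :
  sortable (fun x => x \in V) (indep_complex (fun x => x \in V) E) ->
  (forall x, x \in V ->
     sortable (component V E x) (indep_complex (component V E x) E)).
Proof.
case=> f [finj fsort] x xV; exists f; split.
  by move=> u v [uV _] [vV _]; apply: finj.
move=> F' G' [F [FP Find] eF] [G [GP Gind] eG].
have DF : indep_complex (fun x => x \in V) E F by split => // y /FP [].
have DG : indep_complex (fun x => x \in V) E G by split => // y /GP [].
have gen : forall b, relabel (indep_complex (fun x => x \in V) E) f (sp b F' G') ->
                     relabel (indep_complex (component V E x) E) f (sp b F' G').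
  move=> b [K [KP Kind] eK]; exists K => //; split => // k kK.
  have : f k \in sp b F' G' by rewrite eK; apply: map_f.
  rewrite mem_sp /mu => /andP[m0 _].
  have [y yFG fky] : exists2 y, (y \in F) || (y \in G) & f k = f y.
    case E1 : (f k \in F'); first by move: E1; rewrite eF => /mapP [y yF ->]; exists y; rewrite ?yF.
    case E2 : (f k \in G'); first by move: E2; rewrite eG => /mapP [y yG ->]; exists y; rewrite ?yG ?orbT.
    by rewrite E1 E2 in m0.
  have Cy : component V E x y by case/orP: yFG => [/FP|/GP].
  by rewrite (finj k y (KP k kK) (proj1 Cy) fky).
case: (fsort F' G' (ex_intro2 _ _ F DF eF) (ex_intro2 _ _ G DG eG)) => H1 H2.
split; [exact: (gen false H1) | exact: (gen true H2)].
Qed.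

Lemma xor_eq (a c b : bool) : (a (+) c == b) = (c == b (+) a).
Proof. by case: a; case: c; case: b. Qed.

Lemma backward (V : seq nat) (E : rel nat)
  (symE : symmetric E) (irrE : irreflexive E)
  (HE : forall x y, E x y -> (x \in V) && (y \in V)) :
  (forall x, x \in V ->
     sortable (component V E x) (indep_complex (component V E x) E)) ->
  sortable (fun x => x \in V) (indep_complex (fun x => x \in V) E).
Proof.
move=> Hc.
have Hf : forall x, exists f, x \in V ->
    (forall u v, component V E x u -> component V E x v -> f u = f v -> u = v) /\
    sortable_wrt (relabel (indep_complex (component V E x) E) f).
  move=> x; case xV : (x \in V); last by exists id.
  by case: (Hc x xV) => f Hfx; exists f.
pose fam x := proj1_sig (constructive_indefinite_description _ (Hf x)).
have famP : forall x, x \in V ->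
    (forall u v, component V E x u -> component V E x v -> fam x u = fam x v -> u = v) /\
    sortable_wrt (relabel (indep_complex (component V E x) E) (fam x)).
  move=> x; exact: (proj2_sig (constructive_indefinite_description _ (Hf x))).
pose cb y v : bool := if excluded_middle_informative (connected E y v) then true else false.
have cbP : forall y v, cb y v <-> connected E y v.
  by move=> y v; rewrite /cb; case: excluded_middle_informative.
have conn_refl : forall x, connected E x x by move=> x; exists [::].
have conn_edge : forall x y z, connected E x y -> E y z -> connected E x z.
  move=> x y z [p [pP pl]] yz; exists (rcons p z); split.
    by rewrite rcons_path pP pl yz.
  by rewrite last_rcons.
pose idx v := find (fun y => cb y v) V.
pose rep v := nth 0 V (idx v).
have hasv : forall v, v \in V -> has (fun y => cb y v) V.
  by move=> v vV; apply/hasP; exists v => //; apply/cbP.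
have idx_lt : forall v, v \in V -> idx v < size V by move=> v vV; rewrite -has_find hasv.
have rep_conn : forall v, v \in V -> connected E (rep v) v.
  by move=> v vV; apply/cbP; exact: (nth_find 0 (hasv v vV)).
have rep_in : forall v, v \in V -> rep v \in V by move=> v vV; exact: mem_nth (idx_lt v vV).
have idx_edge : forall u v, E u v -> idx u = idx v.
  move=> u v uv; apply: eq_find => y; apply/idP/idP => /cbP H; apply/cbP.
    exact: conn_edge H uv.
  by apply: conn_edge H _; rewrite symE.
pose h v := fam (rep v) v.
pose M := (sumn (map h V)).+1.
have hM : forall v, v \in V -> h v < M by move=> v vV; rewrite ltnS; exact: le_sumn.
pose g v := idx v * M + h v.
have g_inj : forall u v, u \in V -> v \in V -> g u = g v -> u = v.
  move=> u v uV vV /(block_inj _ _ _ _ _ (hM u uV) (hM v vV)) [ie he].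
  have [finj _] := famP _ (rep_in u uV).
  apply: finj; first by split => //; apply: rep_conn.
    by split => //; rewrite /rep ie; apply: rep_conn.
  by rewrite /h /rep ie in he *.
have lt_g : forall u v, u \in V -> v \in V ->
    ((g v < g u) : nat) = (idx v < idx u) + ((idx v == idx u) && (h v < h u)).
  move=> u v uV vV; exact: block_lt _ _ _ _ _ (hM v vV) (hM u uV).
exists g; split; first exact: g_inj.
move=> F' G' [F [FV Find] eF] [G [GV Gind] eG].
suff main : forall b, relabel (indep_complex (fun x => x \in V) E) g (sp b F' G').
  by split; [exact: (main false) | exact: (main true)].
move=> b.
pose S := sp b F' G'.
have SFG : forall w, w \in S -> exists2 y, y \in V & w = g y.
  move=> w; rewrite /S mem_sp /mu => /andP[m0 _].
  case E1 : (w \in F'); first by move: E1; rewrite eF => /mapP [y yF ->]; exists y => //; apply: FV.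
  case E2 : (w \in G'); first by move: E2; rewrite eG => /mapP [y yG ->]; exists y => //; apply: GV.
  by rewrite E1 E2 in m0.
exists [seq v <- V | g v \in S]; last first.
  move=> w; apply/idP/idP => [wS | /mapP [y]].
    case: (SFG w wS) => y yV wy; rewrite wy; apply: map_f; by rewrite mem_filter yV andbT -wy.
  by rewrite mem_filter => /andP[yS _] ->.
split; first by move=> y; rewrite mem_filter => /andP[_].
move=> u v; rewrite !mem_filter => /andP[uS uV] /andP[vS vV]; apply/negP => Euv.
have ie := idx_edge u v Euv.
pose i := idx u. pose r := rep u.
have [finj fsort] := famP r (rep_in u uV).
pose fr := fam r.
have hr : forall y, idx y = i -> h y = fr y by move=> y yi; rewrite /h /rep yi.
have compr : forall y, y \in V -> idx y = i -> component V E r y.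
  move=> y yV yi; split => //; have := rep_conn y yV; rewrite /rep yi; exact.
pose Fr := [seq y <- F | idx y == i].
pose Gr := [seq y <- G | idx y == i].
have FrC : forall y, y \in Fr -> component V E r y.
  move=> y; rewrite mem_filter => /andP[/eqP yi yF]; exact: compr (FV y yF) yi.
have GrC : forall y, y \in Gr -> component V E r y.
  move=> y; rewrite mem_filter => /andP[/eqP yi yG]; exact: compr (GV y yG) yi.
have DFr : indep_complex (component V E r) E Fr.
  split => // x y; rewrite !mem_filter => /andP[_ xF] /andP[_ yF]; exact: Find.
have DGr : indep_complex (component V E r) E Gr.
  split => // x y; rewrite !mem_filter => /andP[_ xG] /andP[_ yG]; exact: Gind.
pose A := count (fun y => idx y < i) (undup F) + count (fun y => idx y < i) (undup G).
have [K [KC Kind] eK] : relabel (indep_complex (component V E r) E) fr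
                          (sp (b (+) odd A) (map fr Fr) (map fr Gr)).
  have [H1 H2] := fsort _ _ (ex_intro2 _ _ Fr DFr (fun _ => erefl)) (ex_intro2 _ _ Gr DGr (fun _ => erefl)).
  by case: (b (+) odd A); [exact H2 | exact H1].
have key : forall w, w \in V -> idx w = i ->
    (g w \in S) = (fr w \in sp (b (+) odd A) (map fr Fr) (map fr Gr)).
  move=> w wV wi; rewrite /S !mem_sp.
  have muE : mu F' G' (g w) = mu (map fr Fr) (map fr Gr) (fr w).
    rewrite (mu_eqi _ _ _ _ _ eF eG) /mu.
    rewrite (mem_map_injP (fun x => x \in V) g F w g_inj FV wV).
    rewrite (mem_map_injP (fun x => x \in V) g G w g_inj GV wV).
    rewrite (mem_map_injP (component V E r) fr Fr w finj FrC (compr w wV wi)).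
    rewrite (mem_map_injP (component V E r) fr Gr w finj GrC (compr w wV wi)).
    by rewrite /Fr /Gr !mem_filter wi eqxx.
  have clE : cl F' G' (g w) = A + cl (map fr Fr) (map fr Gr) (fr w).
    rewrite (cl_eqi _ _ _ _ _ eF eG) /cl.
    rewrite (count_undup_map_inj (fun x => x \in V) g F _ g_inj FV).
    rewrite (count_undup_map_inj (fun x => x \in V) g G _ g_inj GV).
    rewrite (count_undup_map_inj (component V E r) fr Fr _ finj FrC).
    rewrite (count_undup_map_inj (component V E r) fr Gr _ finj GrC).
    rewrite (count_split3 (undup F) _ (fun y => idx y < i) (fun y => (idx y == i) && (h y < h w))); last first.
      move=> y; rewrite mem_undup => yF; rewrite (lt_g w y wV (FV y yF)) wi; reflexivity.
    rewrite (count_split3 (undup G) _ (fun y => idx y < i) (fun y => (idx y == i) && (h y < h w))); last first.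
      move=> y; rewrite mem_undup => yG; rewrite (lt_g w y wV (GV y yG)) wi; reflexivity.
    have XF : count (fun y => fr y < fr w) (undup Fr) = count (fun y => (idx y == i) && (h y < h w)) (undup F).
      rewrite /Fr -filter_undup count_filter; apply: eq_in_count => y _ /=.
      case: (eqVneq (idx y) i) => yi /=; last by rewrite andbF.
      by rewrite andbT (hr y yi) (hr w wi).
    have XG : count (fun y => fr y < fr w) (undup Gr) = count (fun y => (idx y == i) && (h y < h w)) (undup G).
      rewrite /Gr -filter_undup count_filter; apply: eq_in_count => y _ /=.
      case: (eqVneq (idx y) i) => yi /=; last by rewrite andbF.
      by rewrite andbT (hr y yi) (hr w wi).
    rewrite XF XG /A; lia.
  rewrite muE clE oddD.
  by rewrite xor_eq.
have inK : forall w, w \in V -> idx w = i -> g w \in S -> w \in K.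
  move=> w wV wi; rewrite key // eK => /mapP [k kK fk].
  by rewrite (finj w k (compr w wV wi) (KC k kK) fk).
have := Kind u v (inK u uV erefl uS) (inK v vV (esym ie) vS).
by rewrite Euv.
Qed.

Theorem corollary1p5 (V : seq nat) (E : rel nat)
  (symE : symmetric E) (irrE : irreflexive E)
  (HE : forall x y, E x y -> (x \in V) && (y \in V)) :
  sortable (fun x => x \in V) (indep_complex (fun x => x \in V) E) <->
  (forall x, x \in V ->
     sortable (component V E x) (indep_complex (component V E x) E)).
Proof.
split; [exact: forward | exact: backward].
Qed.
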